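(* In the generic model, let $\sigma:=-\partial_0\circ\mathcal P\colon H_R\to\mathbb R$ (the coefficient of $x$ in $\mathcal P$, negated). Then for every $w\in H_R$, $$\sigma\big(B_+(w)\big)=\sum_{n\ge0}c_{n-1}\,\sigma^{\star n}(w),$$ where $\sigma^{\star0}=\varepsilon$ and the sum is finite since $\sigma^{\star n}$ vanishes on forests with fewer than $n$ nodes.
   Context: Generic model: $f\colon[0,\infty)\to\mathbb R$ continuous with $f(\zeta)-c/\zeta=O(\zeta^{-1-\epsilon})$ at infinity; Mellin transform $F(z)=\int_0^\infty f(\zeta)\zeta^{-z}d\zeta=\sum_{n\ge-1}c_nz^n$ near $0$. $H_R$: Connes–Kreimer Hopf algebra of rooted trees ($B_+$ grafts a forest onto a new root; $\Delta\circ B_+=B_+\otimes\mathbb 1+(\mathrm{id}\otimes B_+)\circ\Delta$; counit $\varepsilon$; antipode $S$). $\phi_s(w)=s^{-z|w|}\prod_vF(z|w_v|)$ multiplicative, $\phi_{R,s}=\phi_\mu^{\star-1}\star\phi_s$, and $\mathcal P(w)\in\mathbb R[x]$ with $\lim_{z\to0}\phi_{R,s}(w)=\mathcal P(w)(\ln\frac s\mu)$. $\partial_0=\mathrm{ev}_0\circ\frac d{dx}$; convolution of functionals $\alpha\star\beta=m\circ(\alpha\otimes\beta)\circ\Delta$. *)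

(* Defs.v *)
From Stdlib Require Import Reals List.
Import ListNotations.
Open Scope R_scope.

(* Trees are represented planarly; all functionals below only depend on the
   isomorphism class, and every (non-planar) forest has a representative. *)
Inductive tree : Type := Node : list tree -> tree.
Definition forest := list tree.   (* a monomial of H_R; [] is the unit 1 *)

Definition Bplus (w : forest) : tree := Node w.

Fixpoint tsize (t : tree) : nat :=
  match t with
  | Node ts => S ((fix fs (l : list tree) : nat :=
                     match l with [] => 0%nat | u :: l' => (tsize u + fs l')%nat end) ts)
  end.
Definition fsize (w : forest) : nat := fold_right (fun t n => (tsize t + n)%nat) 0%nat w.

(* Coproduct, given as the list of terms  w' (x) w''  (each with coefficient 1):
   Delta(1) = 1 (x) 1, Delta multiplicative,
   Delta(B_+ w) = B_+ w (x) 1 + (id (x) B_+) Delta(w). *)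
Fixpoint cop_t (t : tree) : list (forest * forest) :=
  match t with
  | Node ws =>
      ([t], []) ::
      map (fun p => (fst p, [Node (snd p)]))
        ((fix cop_f (l : list tree) : list (forest * forest) :=
            match l with
            | [] => [([], [])]
            | u :: l' =>
                flat_map (fun p => map (fun q => (fst p ++ fst q, snd p ++ snd q)%list)
                                       (cop_f l'))
                         (cop_t u)
            end) ws)
  end.

Fixpoint cop (w : forest) : list (forest * forest) :=
  match w with
  | [] => [([], [])]
  | u :: l' =>
      flat_map (fun p => map (fun q => (fst p ++ fst q, snd p ++ snd q)%list) (cop l'))
               (cop_t u)
  end.

(* Linear functionals H_R -> R are given by their values on forests. *)
Definition counit (w : forest) : R := match w with [] => 1 | _ => 0 end.

Definition conv (alpha beta : forest -> R) (w : forest) : R :=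
  fold_right Rplus 0 (map (fun p => alpha (fst p) * beta (snd p)) (cop w)).

Fixpoint conv_pow (alpha : forest -> R) (n : nat) : forest -> R :=
  match n with
  | O => counit
  | S k => conv alpha (conv_pow alpha k)
  end.

(* prod over the vertices v of t of G(|t_v|), t_v the subtree rooted at v *)
Fixpoint tprod (G : nat -> R) (t : tree) : R :=
  match t with
  | Node ts => G (tsize t) *
      (fix fp (l : list tree) : R :=
         match l with [] => 1 | u :: l' => tprod G u * fp l' end) ts
  end.
Definition fprod (G : nat -> R) (w : forest) : R := fold_right (fun t r => tprod G t * r) 1 w.

(* phi_s(w) = s^{-z|w|} prod_v F(z |w_v|)  (as a function of the regulator z) *)
Definition phi (F : R -> R) (s z : R) (w : forest) : R :=
  Rpower s (- (z * INR (fsize w))) * fprod (fun n => F (z * INR n)) w.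

Definition improper_int_0_inf (g : R -> R) (l : R) : Prop :=
  (forall a b, 0 < a -> a <= b -> inhabited (Riemann_integrable g a b)) /\
  forall eta, 0 < eta -> exists d M, 0 < d /\ 0 < M /\
    forall a b (pr : Riemann_integrable g a b), 0 < a < d -> M < b ->
      Rabs (RiemannInt pr - l) < eta.

(* polynomials as coefficient lists, lowest degree first *)
Definition peval (p : list R) (x : R) : R := fold_right (fun a acc => a + x * acc) 0 p.
(* partial_0 = ev_0 o d/dx : the coefficient of x *)
Definition partial0 (p : list R) : R := nth 1 p 0.

(* Main.v *)
Require Import Defs.
From Stdlib Require Import Reals List Lra Lia FunctionalExtensionality.
Import ListNotations.
Open Scope R_scope.

Definition sumL {A} (f : A -> R) (l : list A) : R := fold_right Rplus 0 (map f l).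

Lemma sumL_nil {A} (f : A -> R) : sumL f [] = 0.
Proof. reflexivity. Qed.
Lemma sumL_cons {A} (f : A -> R) a l : sumL f (a :: l) = f a + sumL f l.
Proof. reflexivity. Qed.
Lemma sumL_app {A} (f : A -> R) l1 l2 : sumL f (l1 ++ l2) = sumL f l1 + sumL f l2.
Proof. induction l1; simpl; unfold sumL in *; simpl; try rewrite IHl1; ring. Qed.
Lemma sumL_map {A B} (f : B -> R) (g : A -> B) l : sumL f (map g l) = sumL (fun x => f (g x)) l.
Proof. induction l; [reflexivity|]. rewrite !sumL_cons. simpl. rewrite sumL_cons, IHl. reflexivity. Qed.
Lemma sumL_flat_map {A B} (f : B -> R) (g : A -> list B) l :
  sumL f (flat_map g l) = sumL (fun x => sumL f (g x)) l.
Proof. induction l; [reflexivity|]. simpl. rewrite sumL_app, sumL_cons, IHl. reflexivity. Qed.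
Lemma sumL_ext {A} (f g : A -> R) l : (forall x, In x l -> f x = g x) -> sumL f l = sumL g l.
Proof. induction l; intros H; [reflexivity|]. rewrite !sumL_cons, H, IHl; [reflexivity| intros; apply H; simpl; auto | simpl; auto]. Qed.
Lemma sumL_plus {A} (f g : A -> R) l : sumL (fun x => f x + g x) l = sumL f l + sumL g l.
Proof. induction l; [unfold sumL; simpl; ring|]. rewrite !sumL_cons, IHl; ring. Qed.
Lemma sumL_minus {A} (f g : A -> R) l : sumL (fun x => f x - g x) l = sumL f l - sumL g l.
Proof. induction l; [unfold sumL; simpl; ring|]. rewrite !sumL_cons, IHl; ring. Qed.
Lemma sumL_scal_l {A} (c : R) (f : A -> R) l : sumL (fun x => c * f x) l = c * sumL f l.
Proof. induction l; [unfold sumL; simpl; ring|]. rewrite !sumL_cons, IHl; ring. Qed.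
Lemma sumL_scal_r {A} (c : R) (f : A -> R) l : sumL (fun x => f x * c) l = sumL f l * c.
Proof. induction l; [unfold sumL; simpl; ring|]. rewrite !sumL_cons, IHl; ring. Qed.
Lemma sumL_zero {A} (f : A -> R) l : (forall x, In x l -> f x = 0) -> sumL f l = 0.
Proof. intros H. rewrite (sumL_ext f (fun _ => 0)); auto. induction l; [reflexivity|]. rewrite sumL_cons, IHl; [ring|]. intros; apply H; simpl; auto. Qed.
Lemma sumL_swap {A B} (F : A -> B -> R) l1 l2 :
  sumL (fun x => sumL (fun y => F x y) l2) l1 = sumL (fun y => sumL (fun x => F x y) l1) l2.
Proof.
  induction l1; simpl.
  - symmetry. apply sumL_zero. intros. reflexivity.
  - rewrite sumL_cons, IHl1, <- sumL_plus. apply sumL_ext; intros; rewrite sumL_cons; ring.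
Qed.

Definition pmul (A B : list (forest * forest)) : list (forest * forest) :=
  flat_map (fun p => map (fun q => (fst p ++ fst q, snd p ++ snd q)%list) B) A.

Lemma cop_cons u l : cop (u :: l) = pmul (cop_t u) (cop l).
Proof. reflexivity. Qed.

Definition copf := (fix cop_f (l : list tree) : list (forest * forest) :=
            match l with
            | [] => [([], [])]
            | u :: l' =>
                flat_map (fun p => map (fun q => (fst p ++ fst q, snd p ++ snd q)%list)
                                       (cop_f l'))
                         (cop_t u)
            end).
Lemma copf_eq ws : copf ws = cop ws.
Proof. induction ws; simpl; [reflexivity|]. rewrite IHws; reflexivity. Qed.

Lemma cop_t_Node ws : cop_t (Node ws) =
  (([Node ws] : forest), ([] : forest)) :: map (fun p : forest * forest => ((fst p : forest), ([Node (snd p)] : forest))) (cop ws).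
Proof. simpl. rewrite <- copf_eq. reflexivity. Qed.

Lemma fsize_Node ws : tsize (Node ws) = S (fsize ws).
Proof. simpl. f_equal; try (induction ws; simpl; auto). Qed.

Lemma fs_eq l : (fix fs (l : list tree) : nat := match l with [] => 0%nat | u :: l' => (tsize u + fs l')%nat end) l = fsize l.
Proof. induction l; simpl; auto. Qed.

Lemma fsize_single t : fsize [t] = tsize t.
Proof. unfold fsize. simpl. lia. Qed.

Lemma fsize_app a b : fsize (a ++ b) = (fsize a + fsize b)%nat.
Proof. induction a; simpl; auto. unfold fsize in *. simpl. rewrite IHa. lia. Qed.

Lemma tsize_pos t : (1 <= tsize t)%nat.
Proof. destruct t; simpl; lia. Qed.

Lemma fsize_nonnil w : w <> [] -> (1 <= fsize w)%nat.
Proof. destruct w; [congruence|]. intros _. unfold fsize; simpl. pose proof (tsize_pos t). lia. Qed.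

Lemma pmul_nil_r A : pmul A [([],[])] = A.
Proof. induction A as [|[a b] A IH]; simpl; auto. rewrite !app_nil_r. f_equal. exact IH. Qed.
Lemma pmul_nil_l B : pmul [([],[])] B = B.
Proof. unfold pmul. simpl. rewrite app_nil_r. induction B as [|[a b] B IH]; simpl; auto. f_equal; auto. Qed.

Definition pc (a q : forest * forest) : forest * forest := (fst a ++ fst q, snd a ++ snd q)%list.
Lemma pmul_assoc_aux a B C :
  flat_map (fun p => map (pc p) C) (map (pc a) B) = map (pc a) (flat_map (fun p => map (pc p) C) B).
Proof.
  induction B as [|b B IHB]; simpl; auto.
  rewrite map_app, IHB, map_map. f_equal. apply map_ext. intros. unfold pc. simpl. rewrite !app_assoc. reflexivity.
Qed.
Lemma pmul_assoc A B C : pmul (pmul A B) C = pmul A (pmul B C).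
Proof.
  unfold pmul. change (fun p => map (fun q => (fst p ++ fst q, snd p ++ snd q)%list) C) with (fun p => map (pc p) C).
  change (fun p => map (fun q => (fst p ++ fst q, snd p ++ snd q)%list) B) with (fun p => map (pc p) B).
  change (fun p => map (fun q => (fst p ++ fst q, snd p ++ snd q)%list) (flat_map (fun p => map (pc p) C) B))
    with (fun p => map (pc p) (flat_map (fun p => map (pc p) C) B)).
  induction A as [|a A IH]; simpl; auto.
  rewrite flat_map_app, IH. f_equal. apply pmul_assoc_aux.
Qed.

Lemma cop_app a b : cop (a ++ b) = pmul (cop a) (cop b).
Proof.
  induction a.
  - simpl app. change (cop b = pmul [([],[])] (cop b)). rewrite pmul_nil_l. reflexivity.
  - change (pmul (cop_t a) (cop (a0 ++ b)) = pmul (pmul (cop_t a) (cop a0)) (cop b)).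
    rewrite IHa, pmul_assoc. reflexivity.
Qed.

Lemma cop_single t : cop [t] = cop_t t.
Proof. change (pmul (cop_t t) [([],[])] = cop_t t). apply pmul_nil_r. Qed.

Lemma sumL_pmul (f : forest * forest -> R) A B :
  sumL f (pmul A B) = sumL (fun p => sumL (fun q => f (fst p ++ fst q, snd p ++ snd q)%list) B) A.
Proof. unfold pmul. rewrite sumL_flat_map. apply sumL_ext; intros. rewrite sumL_map. reflexivity. Qed.

Lemma In_pmul p A B : In p (pmul A B) -> exists a b, In a A /\ In b B /\ p = (fst a ++ fst b, snd a ++ snd b)%list.
Proof. unfold pmul. intros H. apply in_flat_map in H as [a [Ha Hb]]. apply in_map_iff in Hb as [b [Hb1 Hb2]]. exists a, b; auto. Qed.

Lemma tree_ind' (Pt : tree -> Prop) :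
  (forall ws, Forall Pt ws -> Pt (Node ws)) -> forall t, Pt t.
Proof.
  intros H. fix IH 1. intros [ws]. apply H.
  induction ws; constructor; auto.
Qed.

Lemma cop_size_gen (Pt : tree -> Prop) :
  (forall t, Pt t) -> True.
Proof. auto. Qed.

Lemma cop_forest_of_trees (Pt : tree -> Prop) (Pf : forest -> Prop) :
  Pf [] -> (forall u l, Pt u -> Pf l -> Pf (u :: l)) -> forall ws, Forall Pt ws -> Pf ws.
Proof. intros H0 H1 ws Hws; induction Hws; auto. Qed.

Lemma size_cop_all : forall t, (forall p, In p (cop_t t) -> (fsize (fst p) + fsize (snd p))%nat = tsize t).
Proof.
  apply (tree_ind' (fun t => forall p, In p (cop_t t) -> (fsize (fst p) + fsize (snd p))%nat = tsize t)). intros ws Hws.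
  assert (Hf : forall p, In p (cop ws) -> (fsize (fst p) + fsize (snd p))%nat = fsize ws).
  { revert Hws. apply (cop_forest_of_trees (fun t => forall p, In p (cop_t t) -> (fsize (fst p) + fsize (snd p))%nat = tsize t)
       (fun ws => forall p, In p (cop ws) -> (fsize (fst p) + fsize (snd p))%nat = fsize ws)).
    - intros p [<-|[]]. reflexivity.
    - intros u l Hu Hl p Hp. rewrite cop_cons in Hp. apply In_pmul in Hp as [a [b [Ha [Hb ->]]]].
      simpl. rewrite !fsize_app. specialize (Hu a Ha). specialize (Hl b Hb).
      unfold fsize at 5. simpl. fold (fsize l). lia. }
  intros p Hp. rewrite cop_t_Node in Hp. rewrite fsize_Node. destruct Hp as [<-|Hp].
  - cbn [fst snd]. rewrite fsize_single, fsize_Node. unfold fsize at 2. simpl. lia.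
  - apply in_map_iff in Hp as [q [<- Hq]]. cbn [fst snd]. specialize (Hf q Hq).
    rewrite fsize_single, fsize_Node. unfold forest in *. lia.
Qed.

Lemma size_cop w p : In p (cop w) -> (fsize (fst p) + fsize (snd p))%nat = fsize w.
Proof.
  revert p. induction w; intros p Hp.
  - destruct Hp as [<-|[]]. reflexivity.
  - rewrite cop_cons in Hp. apply In_pmul in Hp as [x [y [Hx [Hy ->]]]].
    simpl. rewrite !fsize_app. pose proof (size_cop_all a x Hx). specialize (IHw y Hy).
    unfold fsize at 5. simpl. fold (fsize w). lia.
Qed.

Lemma cop_t_hd t : exists rest, cop_t t = (([t]:forest), ([]:forest)) :: rest /\ forall p, In p rest -> snd p <> [].
Proof.
  destruct t as [ws]. rewrite cop_t_Node. eexists; split; [reflexivity|].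
  intros p Hp. apply in_map_iff in Hp as [q [<- _]]. simpl. discriminate.
Qed.

Lemma cop_hd w : exists rest, cop w = ((w:forest), ([]:forest)) :: rest /\ forall p, In p rest -> snd p <> [].
Proof.
  induction w as [|u l IH].
  - exists []. split; [reflexivity| intros p []].
  - destruct IH as [rl [Hl Hrl]]. destruct (cop_t_hd u) as [rt [Ht Hrt]].
    rewrite cop_cons, Hl, Ht. unfold pmul. simpl.
    eexists; split; [reflexivity|].
    intros p Hp. apply in_app_or in Hp as [Hp|Hp].
    + apply in_map_iff in Hp as [q [<- Hq]]. simpl. apply Hrl; auto.
    + apply in_flat_map in Hp as [a [Ha Hb]].
      assert (Hq : exists q : forest * forest, p = (fst a ++ fst q, snd a ++ snd q)%list).
      { destruct Hb as [<-|Hb]; [exists (l,[]); reflexivity|].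
        apply in_map_iff in Hb as [q [<- _]]. exists q; reflexivity. }
      destruct Hq as [q ->]. simpl. intros E. apply app_eq_nil in E as [E _]. apply (Hrt a Ha E).
Qed.

Lemma conv_split (f : forest * forest -> R) w :
  exists rest, sumL f (cop w) = f (w, []) + sumL f rest /\
     forall p, In p rest -> (fsize (fst p) < fsize w)%nat.
Proof.
  destruct (cop_hd w) as [rest [H1 H2]]. exists rest. rewrite H1. split; [reflexivity|].
  intros p Hp. assert (Hin : In p (cop w)) by (rewrite H1; right; auto).
  pose proof (size_cop w p Hin). pose proof (fsize_nonnil _ (H2 p Hp)). lia.
Qed.

Lemma counit_app a b : counit (a ++ b) = counit a * counit b.
Proof. destruct a; destruct b; simpl; ring. Qed.

Lemma conv_unit_r alpha w : conv alpha counit w = alpha w.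
Proof.
  unfold conv. fold (sumL (fun p => alpha (fst p) * counit (snd p)) (cop w)).
  destruct (cop_hd w) as [rest [H1 H2]]. rewrite H1, sumL_cons. simpl.
  rewrite sumL_zero; [ring|]. intros p Hp. specialize (H2 p Hp). destruct (snd p); [congruence|]. simpl. ring.
Qed.

Lemma unit_l_all : forall w (beta : forest -> R), sumL (fun p => counit (fst p) * beta (snd p)) (cop w) = beta w.
Proof.
  assert (Ht : forall t (beta : forest -> R), sumL (fun p => counit (fst p) * beta (snd p)) (cop_t t) = beta [t]).
  { apply (tree_ind' (fun t => forall beta : forest -> R, sumL (fun p => counit (fst p) * beta (snd p)) (cop_t t) = beta [t])).
    intros ws Hws beta. rewrite cop_t_Node, sumL_cons, sumL_map. simpl.
    assert (Hf : forall beta : forest -> R, sumL (fun p => counit (fst p) * beta (snd p)) (cop ws) = beta ws).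
    { induction Hws as [|u l Hu Hl IH]; intros b.
      - unfold sumL; simpl. ring.
      - rewrite cop_cons, sumL_pmul.
        rewrite (sumL_ext _ (fun p => counit (fst p) * b (snd p ++ l)%list)).
        + apply (Hu (fun x => b (x ++ l)%list)).
        + intros a _. simpl. rewrite <- (IH (fun y => b (snd a ++ y)%list)), <- sumL_scal_l.
          apply sumL_ext. intros q _. rewrite counit_app, Rmult_assoc. reflexivity. }
    rewrite Rmult_0_l, Rplus_0_l. exact (Hf (fun x => beta [Node x])). }
  induction w as [|u l IH]; intros beta.
  - unfold sumL; simpl. ring.
  - rewrite cop_cons, sumL_pmul.
    rewrite (sumL_ext _ (fun p => counit (fst p) * beta (snd p ++ l)%list)).
    + apply (Ht u (fun x => beta (x ++ l)%list)).
    + intros a _. simpl. rewrite <- (IH (fun y => beta (snd a ++ y)%list)), <- sumL_scal_l.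
      apply sumL_ext. intros q _. rewrite counit_app, Rmult_assoc. reflexivity.
Qed.

Lemma conv_unit_l beta w : conv counit beta w = beta w.
Proof. apply unit_l_all. Qed.

Definition LL (l : list (forest*forest)) (F : forest -> forest -> forest -> R) :=
  sumL (fun p => sumL (fun q => F (fst q) (snd q) (snd p)) (cop (fst p))) l.
Definition RR (l : list (forest*forest)) (F : forest -> forest -> forest -> R) :=
  sumL (fun p => sumL (fun q => F (fst p) (fst q) (snd q)) (cop (snd p))) l.

Lemma LL_cons u l F : LL (cop (u :: l)) F =
  LL (cop_t u) (fun a b c => LL (cop l) (fun a' b' c' => F (a ++ a') (b ++ b') (c ++ c'))%list).
Proof.
  unfold LL. rewrite cop_cons, sumL_pmul. apply sumL_ext. intros x _.
  simpl. rewrite <- sumL_swap. apply sumL_ext. intros y _. simpl.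
  rewrite cop_app, sumL_pmul. reflexivity.
Qed.

Lemma RR_cons u l F : RR (cop (u :: l)) F =
  RR (cop_t u) (fun a b c => RR (cop l) (fun a' b' c' => F (a ++ a') (b ++ b') (c ++ c'))%list).
Proof.
  unfold RR. rewrite cop_cons, sumL_pmul. apply sumL_ext. intros x _.
  simpl. rewrite <- sumL_swap. apply sumL_ext. intros y _. simpl.
  rewrite cop_app, sumL_pmul. reflexivity.
Qed.

Lemma coassoc_all : forall w F, LL (cop w) F = RR (cop w) F.
Proof.
  assert (Hf : forall ws, Forall (fun t => forall F, LL (cop_t t) F = RR (cop_t t) F) ws ->
     forall F, LL (cop ws) F = RR (cop ws) F).
  { intros ws Hws. induction Hws as [|u l Hu Hl IH]; intros F.
    - unfold LL, RR. simpl. unfold sumL. simpl. ring.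
    - rewrite LL_cons, RR_cons, Hu. f_equal. apply functional_extensionality; intro a.
      apply functional_extensionality; intro b. apply functional_extensionality; intro c. apply IH. }
  assert (Ht : forall t F, LL (cop_t t) F = RR (cop_t t) F).
  { apply (tree_ind' (fun t => forall F, LL (cop_t t) F = RR (cop_t t) F)).
    intros ws Hws F. specialize (Hf ws Hws).
    unfold LL, RR. rewrite cop_t_Node, !sumL_cons, !sumL_map. cbn [fst snd].
    rewrite cop_single, cop_t_Node, sumL_cons, sumL_map. cbn [fst snd].
    rewrite (sumL_ext (fun x : forest * forest => sumL _ (cop [Node (snd x)]))
                      (fun x => F (fst x) [Node (snd x)] [] +
                                sumL (fun q : forest * forest => F (fst x) (fst q) [Node (snd q)]) (cop (snd x)))).
    2:{ intros x _. rewrite cop_single, cop_t_Node, sumL_cons, sumL_map. reflexivity. }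
    rewrite sumL_plus.
    pose proof (Hf (fun a b c => F a b [Node c])) as E. unfold LL, RR in E. cbn beta in E.
    rewrite E. unfold sumL at 4. simpl. ring. }
  intros w. apply Hf. induction w; constructor; auto.
Qed.

Lemma conv_sumL a b w : conv a b w = sumL (fun p => a (fst p) * b (snd p)) (cop w).
Proof. reflexivity. Qed.

Lemma conv_assoc a b c w : conv (conv a b) c w = conv a (conv b c) w.
Proof.
  rewrite !conv_sumL.
  transitivity (LL (cop w) (fun x y z => a x * b y * c z)).
  - unfold LL. apply sumL_ext. intros p _. rewrite conv_sumL, <- sumL_scal_r. reflexivity.
  - rewrite coassoc_all. unfold RR. apply sumL_ext. intros p _. rewrite conv_sumL, <- sumL_scal_l.
    apply sumL_ext. intros; ring.
Qed.

Lemma conv_assocF a b c : conv (conv a b) c = conv a (conv b c).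
Proof. apply functional_extensionality; intro; apply conv_assoc. Qed.
Lemma conv_unit_lF b : conv counit b = b.
Proof. apply functional_extensionality; intro; apply conv_unit_l. Qed.
Lemma conv_unit_rF b : conv b counit = b.
Proof. apply functional_extensionality; intro; apply conv_unit_r. Qed.

Lemma conv_minus_l a b c w : conv (fun x => a x - b x) c w = conv a c w - conv b c w.
Proof. rewrite !conv_sumL, <- sumL_minus. apply sumL_ext; intros; ring. Qed.

Lemma conv_cancel d psi : psi [] = 1 -> (forall w, conv d psi w = 0) -> forall w, d w = 0.
Proof.
  intros H1 H2.
  assert (forall n w, (fsize w <= n)%nat -> d w = 0).
  { induction n; intros w Hw.
    - destruct (conv_split (fun p => d (fst p) * psi (snd p)) w) as [rest [E Hr]].
      specialize (H2 w). rewrite conv_sumL, E in H2. simpl in H2. rewrite H1 in H2.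
      rewrite sumL_zero in H2; [lra|]. intros p Hp. specialize (Hr p Hp). lia.
    - destruct (conv_split (fun p => d (fst p) * psi (snd p)) w) as [rest [E Hr]].
      specialize (H2 w). rewrite conv_sumL, E in H2. simpl in H2. rewrite H1 in H2.
      rewrite sumL_zero in H2; [lra|]. intros p Hp. specialize (Hr p Hp). rewrite IHn; [ring|lia]. }
  intros w. apply (H (fsize w)). lia.
Qed.

Lemma right_inverse inv psi : psi [] = 1 -> (forall w, conv inv psi w = counit w) ->
  forall w, conv psi inv w = counit w.
Proof.
  intros H1 H2.
  assert (Hinv : conv inv psi = counit) by (apply functional_extensionality; auto).
  assert (forall w, conv psi inv w - counit w = 0).
  { apply (conv_cancel (fun w => conv psi inv w - counit w) psi H1). intros w.
    rewrite conv_minus_l. rewrite conv_assoc. rewrite Hinv, conv_unit_r, conv_unit_l. ring. }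
  intros w. specialize (H w). lra.
Qed.

Definition theta (c : R) (a : forest -> R) (x : forest) : R := exp (c * INR (fsize x)) * a x.

Lemma theta_conv c a b : conv (theta c a) (theta c b) = theta c (conv a b).
Proof.
  apply functional_extensionality; intro w. unfold theta. rewrite !conv_sumL, <- sumL_scal_l.
  apply sumL_ext. intros p Hp. pose proof (size_cop w p Hp) as E.
  rewrite <- E, plus_INR, Rmult_plus_distr_l, exp_plus. ring.
Qed.

Lemma theta_counit c : theta c counit = counit.
Proof.
  apply functional_extensionality; intro w. unfold theta. destruct w; simpl.
  - unfold fsize; simpl. rewrite Rmult_0_r, exp_0. ring.
  - ring.
Qed.

Lemma conv_pow_comm s k : conv (conv_pow s k) s = conv s (conv_pow s k).
Proof.
  induction k; simpl.
  - rewrite conv_unit_lF, conv_unit_rF. reflexivity.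
  - rewrite conv_assocF, IHk. reflexivity.
Qed.

Lemma phi_shift F s a z x : 0 < s ->
  phi F (s * exp a) z x = exp (- (z * a) * INR (fsize x)) * phi F s z x.
Proof.
  intros Hs. unfold phi, Rpower. rewrite ln_mult, ln_exp; auto; [|apply exp_pos].
  rewrite <- Rmult_assoc, <- exp_plus. f_equal. f_equal. ring.
Qed.

Lemma group_law_z F mu z inv a b : 0 < mu ->
  (forall w, conv inv (phi F mu z) w = counit w) ->
  forall v, conv inv (phi F (mu * exp (a + b)) z) v =
    sumL (fun p => conv inv (phi F (mu * exp a) z) (fst p) *
                   (exp (- (z * a) * INR (fsize (snd p))) * conv inv (phi F (mu * exp b) z) (snd p))) (cop v).
Proof.
  intros Hmu Hinv v.
  assert (Hs1 : phi F (mu * exp a) z = theta (- (z * a)) (phi F mu z)).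
  { apply functional_extensionality; intro x. apply phi_shift; auto. }
  assert (Hs' : phi F (mu * exp (a + b)) z = theta (- (z * a)) (phi F (mu * exp b) z)).
  { apply functional_extensionality; intro x. unfold theta.
    rewrite exp_plus, (Rmult_comm (exp a)), <- Rmult_assoc, phi_shift; auto.
    apply Rmult_lt_0_compat; auto; apply exp_pos. }
  assert (Hr : conv (phi F mu z) inv = counit).
  { apply functional_extensionality. apply right_inverse; auto.
    unfold phi. unfold fsize; simpl. rewrite Rmult_0_r, Ropp_0. unfold Rpower. rewrite Rmult_0_l, exp_0. ring. }
  change (conv inv (phi F (mu * exp (a + b)) z) v =
          conv (conv inv (phi F (mu * exp a) z)) (theta (- (z*a)) (conv inv (phi F (mu * exp b) z))) v).
  rewrite <- theta_conv, <- Hs', Hs1, conv_assocF, <- (conv_assocF (theta _ (phi F mu z))), theta_conv, Hr,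
     theta_counit, conv_unit_lF. reflexivity.
Qed.

Definition pos (z : R) : Prop := 0 < z.
Definition cv0 (f : R -> R) (l : R) : Prop := limit1_in f pos l 0.

Lemma cv0_def f l : cv0 f l <-> forall eps, 0 < eps -> exists d, 0 < d /\ forall z, 0 < z < d -> Rabs (f z - l) < eps.
Proof.
  unfold cv0, limit1_in, limit_in, pos. simpl. unfold R_dist. split.
  - intros H eps He. destruct (H eps He) as [d [Hd H1]]. exists d; split; auto.
    intros z Hz. apply H1. split; [lra|]. rewrite Rminus_0_r, Rabs_right; lra.
  - intros H eps He. destruct (H eps He) as [d [Hd H1]]. exists d; split; auto.
    intros z [Hz1 Hz2]. apply H1. rewrite Rminus_0_r, Rabs_right in Hz2; lra.
Qed.

Lemma cv0_const c : cv0 (fun _ => c) c.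
Proof. apply cv0_def. intros eps He. exists 1. split; [lra|]. intros. rewrite Rminus_diag, Rabs_R0; auto. Qed.
Lemma cv0_id : cv0 (fun z => z) 0.
Proof. apply lim_x. Qed.
Lemma cv0_plus f g l l' : cv0 f l -> cv0 g l' -> cv0 (fun z => f z + g z) (l + l').
Proof. apply limit_plus. Qed.
Lemma cv0_minus f g l l' : cv0 f l -> cv0 g l' -> cv0 (fun z => f z - g z) (l - l').
Proof. apply limit_minus. Qed.
Lemma cv0_mult f g l l' : cv0 f l -> cv0 g l' -> cv0 (fun z => f z * g z) (l * l').
Proof. apply limit_mul. Qed.
Lemma cv0_inv f l : cv0 f l -> l <> 0 -> cv0 (fun z => / f z) (/ l).
Proof. apply limit_inv. Qed.
Lemma cv0_div f g l l' : cv0 f l -> cv0 g l' -> l' <> 0 -> cv0 (fun z => f z / g z) (l / l').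
Proof. intros. unfold Rdiv. apply cv0_mult; auto. apply cv0_inv; auto. Qed.

Lemma cv0_ext f g l : (exists d, 0 < d /\ forall z, 0 < z < d -> f z = g z) -> cv0 f l -> cv0 g l.
Proof.
  intros [d0 [Hd0 E]] H. rewrite cv0_def in *. intros eps He. destruct (H eps He) as [d [Hd H1]].
  exists (Rmin d d0). split; [apply Rmin_pos; auto|]. intros z Hz.
  pose proof (Rmin_l d d0); pose proof (Rmin_r d d0).
  rewrite <- E by lra. apply H1. lra.
Qed.
Lemma cv0_ext_all f g l : (forall z, 0 < z -> f z = g z) -> cv0 f l -> cv0 g l.
Proof. intros E. apply cv0_ext. exists 1. split; [lra|]. intros; apply E; lra. Qed.

Lemma cv0_unique f l l' : cv0 f l -> cv0 f l' -> l = l'.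
Proof.
  apply single_limit. unfold adhDa, pos. intros alp Ha. exists (alp/2). simpl. unfold R_dist.
  split; [lra|]. rewrite Rminus_0_r, Rabs_right; lra.
Qed.

Lemma cv0_comp f g l : cv0 f l -> continuity_pt g l -> cv0 (fun z => g (f z)) (g l).
Proof.
  intros H Hc. rewrite cv0_def in *. intros eps He.
  destruct (Hc eps He) as [d1 [Hd1 H1]]. destruct (H d1 Hd1) as [d [Hd H2]].
  exists d; split; auto. intros z Hz. destruct (Req_dec (f z) l) as [E|E].
  - rewrite E, Rminus_diag, Rabs_R0; auto.
  - apply (H1 (f z)). split.
    + unfold D_x, no_cond. split; auto.
    + simpl. unfold R_dist. apply H2; auto.
Qed.

Lemma cv0_pow f l n : cv0 f l -> cv0 (fun z => f z ^ n) (l ^ n).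
Proof.
  intros H. induction n; simpl.
  - apply cv0_const.
  - apply cv0_mult; auto.
Qed.

Lemma cv0_scal c f l : cv0 f l -> cv0 (fun z => c * f z) (c * l).
Proof. intros. apply cv0_mult; auto. apply cv0_const. Qed.

Lemma cv0_sumL {A} (F : R -> A -> R) (G : A -> R) l :
  (forall x, In x l -> cv0 (fun z => F z x) (G x)) -> cv0 (fun z => sumL (F z) l) (sumL G l).
Proof.
  induction l; intros H.
  - apply (cv0_const 0).
  - simpl. unfold sumL. simpl. apply cv0_plus.
    + apply H; simpl; auto.
    + apply IHl. intros; apply H; simpl; auto.
Qed.

Lemma cv0_of_lim f l : limit1_in f (fun z => 0 < z) l 0 -> cv0 f l.
Proof. auto. Qed.

Fixpoint ss (n : nat) (f : nat -> R) : R :=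
  match n with O => 0 | S k => f O + ss k (fun j => f (S j)) end.

Lemma ss_ext n f g : (forall j, (j < n)%nat -> f j = g j) -> ss n f = ss n g.
Proof.
  revert f g; induction n; intros f g H; simpl; auto.
  rewrite H by lia. f_equal. apply IHn. intros; apply H; lia.
Qed.
Lemma ss_plus n f g : ss n (fun j => f j + g j) = ss n f + ss n g.
Proof. revert f g; induction n; intros; simpl; [ring|]. rewrite IHn. ring. Qed.
Lemma ss_minus n f g : ss n (fun j => f j - g j) = ss n f - ss n g.
Proof. revert f g; induction n; intros; simpl; [ring|]. rewrite IHn. ring. Qed.
Lemma ss_scal n c f : ss n (fun j => c * f j) = c * ss n f.
Proof. revert f; induction n; intros; simpl; [ring|]. rewrite IHn. ring. Qed.
Lemma ss_zero n f : (forall j, (j < n)%nat -> f j = 0) -> ss n f = 0.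
Proof. intros H. rewrite (ss_ext n f (fun _ => 0)) by auto. clear H. induction n; simpl; auto. rewrite IHn; ring. Qed.
Lemma ss_S_r n f : ss (S n) f = ss n f + f n.
Proof.
  revert f; induction n; intros; [simpl; ring|].
  change (ss (S (S n)) f) with (f O + ss (S n) (fun j => f (S j))). rewrite IHn. simpl. ring.
Qed.
Lemma ss_sumL {A} n (F : A -> nat -> R) l :
  sumL (fun x => ss n (F x)) l = ss n (fun j => sumL (fun x => F x j) l).
Proof.
  revert F; induction n; intros F; simpl.
  - apply sumL_zero; auto.
  - rewrite sumL_plus, IHn. reflexivity.
Qed.
Lemma ss_single n k f : (k < n)%nat -> (forall j, (j < n)%nat -> j <> k -> f j = 0) -> ss n f = f k.
Proof.
  revert k f; induction n; intros k f Hk H; [lia|]. simpl. destruct k.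
  - rewrite ss_zero; [ring|]. intros j Hj. apply H; lia.
  - rewrite H by lia. rewrite (IHn k (fun j => f (S j))); [ring|lia|]. intros; apply H; lia.
Qed.
Lemma cv0_ss n (F : R -> nat -> R) G :
  (forall j, (j < n)%nat -> cv0 (fun z => F z j) (G j)) -> cv0 (fun z => ss n (F z)) (ss n G).
Proof.
  revert F G; induction n; intros F G H; simpl.
  - apply (cv0_const 0).
  - apply cv0_plus; [apply H; lia|]. apply (IHn (fun z j => F z (S j)) (fun j => G (S j))). intros; apply H; lia.
Qed.

Definition Delta (h : R -> R) (x : R) : R := h (x + 1) - h x.
Fixpoint DI (i : nat) (h : R -> R) : R -> R :=
  match i with O => h | S k => DI k (Delta h) end.

Lemma DI_ext i h g : (forall x, h x = g x) -> forall x, DI i h x = DI i g x.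
Proof.
  revert h g; induction i; intros h g H x; simpl; auto.
  apply IHi. intros y. unfold Delta. rewrite !H. reflexivity.
Qed.

Lemma DI_ss i n (c : nat -> R) (H : nat -> R -> R) x :
  DI i (fun y => ss n (fun j => c j * H j y)) x = ss n (fun j => c j * DI i (H j) x).
Proof.
  revert H x; induction i; intros H x; simpl; auto.
  rewrite (DI_ext i _ (fun y => ss n (fun j => c j * Delta (H j) y))).
  - apply IHi.
  - intros y. unfold Delta. rewrite <- ss_minus. apply ss_ext. intros; ring.
Qed.

Lemma DI_lin i a b h g x : DI i (fun y => a * h y + b * g y) x = a * DI i h x + b * DI i g x.
Proof.
  revert h g x; induction i; intros h g x; simpl; auto.
  rewrite (DI_ext i _ (fun y => a * Delta h y + b * Delta g y)).
  - apply IHi.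
  - intros y. unfold Delta. ring.
Qed.

Lemma DI_minus i h g x : DI i (fun y => h y - g y) x = DI i h x - DI i g x.
Proof.
  rewrite (DI_ext i _ (fun y => 1 * h y + (-1) * g y)) by (intros; ring).
  rewrite DI_lin. ring.
Qed.

Lemma DI_scal i c h x : DI i (fun y => c * h y) x = c * DI i h x.
Proof.
  rewrite (DI_ext i _ (fun y => c * h y + 0 * h y)) by (intros; ring).
  rewrite DI_lin. ring.
Qed.

Lemma DI_shift i h x : DI i (fun y => h (y + 1)) x = DI i h (x + 1).
Proof.
  revert h x; induction i; intros h x; simpl; auto.
  rewrite (DI_ext i _ (fun y => Delta h (y + 1))).
  - apply IHi.
  - intros y. unfold Delta. reflexivity.
Qed.

Lemma DI_S' i h x : DI (S i) h x = DI i h (x + 1) - DI i h x.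
Proof.
  simpl. unfold Delta at 1. rewrite DI_minus, DI_shift. reflexivity.
Qed.

Lemma DI_exp i c x : DI i (fun y => exp (c * y)) x = exp (c * x) * (exp c - 1) ^ i.
Proof.
  revert x; induction i; intros x.
  - simpl. ring.
  - rewrite DI_S', !IHi. rewrite Rmult_plus_distr_l, Rmult_1_r, exp_plus. simpl. ring.
Qed.

Lemma sum_f_ss f n : sum_f_R0 f n = ss (S n) f.
Proof.
  induction n; simpl; [ring|]. rewrite IHn. rewrite <- (ss_S_r (S n)). simpl. ring.
Qed.

Lemma Delta_pow j d y : Delta (fun y => (y + d) ^ j) y = ss j (fun l => C j l * (y + d) ^ l).
Proof.
  unfold Delta. replace (y + 1 + d) with ((y + d) + 1) by ring.
  rewrite binomial, sum_f_ss, ss_S_r. rewrite Nat.sub_diag.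
  assert (Cjj : C j j = 1) by (unfold C; rewrite Nat.sub_diag; simpl; field; apply INR_fact_neq_0).
  rewrite Cjj.
  rewrite (ss_ext j _ (fun l => C j l * (y + d) ^ l)).
  - simpl. ring.
  - intros l _. rewrite pow1. ring.
Qed.

Lemma C_S_n i : C (S i) i = INR (S i).
Proof.
  unfold C. replace (S i - i)%nat with 1%nat by lia.
  rewrite fact_simpl. rewrite mult_INR. replace (INR (Factorial.fact 1)) with 1 by reflexivity.
  field. apply INR_fact_neq_0.
Qed.

Lemma DI_pow : forall i, forall j d x,
  ((j < i)%nat -> DI i (fun y => (y + d) ^ j) x = 0) /\ DI i (fun y => (y + d) ^ i) x = INR (Factorial.fact i).
Proof.
  induction i; intros j d x.
  - split; [lia|]. simpl. reflexivity.
  - assert (Hgen : forall k, DI (S i) (fun y => (y + d) ^ k) x = ss k (fun l => C k l * DI i (fun y => (y + d) ^ l) x)).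
    { intros k. simpl. rewrite (DI_ext i _ (fun y => ss k (fun l => C k l * (y + d) ^ l))).
      - apply DI_ss.
      - intros; apply Delta_pow. }
    split.
    + intros Hj. rewrite Hgen. apply ss_zero. intros l Hl. rewrite (proj1 (IHi l d x)) by lia. ring.
    + rewrite Hgen. rewrite (ss_single (S i) i); [| lia |].
      * rewrite (proj2 (IHi 0%nat d x)), C_S_n. rewrite fact_simpl, mult_INR. reflexivity.
      * intros l Hl Hne. rewrite (proj1 (IHi l d x)) by lia. ring.
Qed.

Lemma DI_bound i : forall h x K, (forall l, (l <= i)%nat -> Rabs (h (x + INR l)) <= K) ->
  Rabs (DI i h x) <= 2 ^ i * K.
Proof.
  induction i; intros h x K H.
  - simpl. specialize (H 0%nat (le_n 0)). simpl in H. rewrite Rplus_0_r in H. lra.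
  - simpl. replace (2 * 2 ^ i * K) with (2 ^ i * (2 * K)) by ring. apply IHi.
    intros l Hl. unfold Delta. pose proof (H (S l) ltac:(lia)) as H1. pose proof (H l ltac:(lia)) as H2.
    rewrite S_INR in H1. replace (x + (INR l + 1)) with (x + INR l + 1) in H1 by ring.
    pose proof (Rabs_triang (h (x + INR l + 1)) (- h (x + INR l))). rewrite Rabs_Ropp in H0.
    unfold Rminus. lra.
Qed.

Lemma DI_cv i : forall (H : R -> R -> R) h, (forall x, cv0 (fun z => H z x) (h x)) ->
  forall x, cv0 (fun z => DI i (H z) x) (DI i h x).
Proof.
  induction i; intros H h Hc x; simpl; auto.
  apply (IHi (fun z => Delta (H z)) (Delta h)). intros y. unfold Delta. apply cv0_minus; auto.
Qed.

Fixpoint bin (m : nat) (j : nat) {struct m} : R :=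
  match j with
  | O => 1
  | S j' => match m with O => 0 | S m' => bin m' j' + bin m' j end
  end.

Lemma bin_gt m j : (m < j)%nat -> bin m j = 0.
Proof.
  revert j; induction m; intros j Hj; destruct j; try lia; simpl; auto.
  rewrite !IHm by lia. ring.
Qed.

Lemma bin_0_r m : bin m 0 = 1.
Proof. destruct m; reflexivity. Qed.

Lemma bin_1 m : bin m 1 = INR m.
Proof. induction m; simpl; auto. rewrite IHm. destruct m; simpl; ring. Qed.

Lemma newton m : forall h N, (m <= N)%nat -> h (INR m) = ss (S N) (fun j => bin m j * DI j h 0).
Proof.
  induction m; intros h N HN.
  - simpl ss. rewrite ss_zero; [simpl; ring|]. intros j _. simpl. ring.
  - destruct N as [|N]; [lia|].
    rewrite S_INR. rewrite (IHm (fun x => h (x + 1)) (S N)) by lia.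
    rewrite (ss_ext _ _ (fun j => bin m j * DI j h 0 + bin m j * DI (S j) h 0)).
    2:{ intros j _. rewrite DI_shift, DI_S'. rewrite Rplus_0_l. ring. }
    rewrite ss_plus. rewrite (ss_S_r (S N) (fun j => bin m j * DI (S j) h 0)).
    rewrite (bin_gt m (S N)) by lia.
    change (ss (S (S N)) (fun j => bin (S m) j * DI j h 0)) with
      (bin (S m) 0 * DI 0 h 0 + ss (S N) (fun j => bin (S m) (S j) * DI (S j) h 0)).
    change (ss (S (S N)) (fun j => bin m j * DI j h 0)) with
      (bin m 0 * DI 0 h 0 + ss (S N) (fun j => bin m (S j) * DI (S j) h 0)).
    rewrite (ss_ext (S N) (fun j => bin (S m) (S j) * DI (S j) h 0)
               (fun j => bin m j * DI (S j) h 0 + bin m (S j) * DI (S j) h 0)).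
    2:{ intros j _. simpl bin. ring. }
    rewrite ss_plus, bin_0_r. simpl bin. ring.
Qed.

Lemma L_expand {A} (l : list A) (c : A -> R) (s : A -> nat) N (h : R -> R) :
  (forall x, In x l -> (s x <= N)%nat) ->
  sumL (fun x => c x * h (INR (s x))) l =
  ss (S N) (fun j => DI j h 0 * sumL (fun x => c x * bin (s x) j) l).
Proof.
  intros Hs.
  rewrite (sumL_ext _ (fun x => ss (S N) (fun j => (c x * DI j h 0) * bin (s x) j))).
  - rewrite ss_sumL. apply ss_ext. intros j _. rewrite <- sumL_scal_l. apply sumL_ext. intros; ring.
  - intros x Hx. rewrite (newton (s x) h N (Hs x Hx)), <- ss_scal. apply ss_ext. intros; ring.
Qed.

Lemma peval_cons a p x : peval (a :: p) x = a + x * peval p x.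
Proof. reflexivity. Qed.

Fixpoint padd (p q : list R) : list R :=
  match p, q with
  | [], q => q
  | p, [] => p
  | a :: p', b :: q' => (a + b) :: padd p' q'
  end.

Lemma peval_padd p q x : peval (padd p q) x = peval p x + peval q x.
Proof.
  revert q; induction p; intros q; destruct q; simpl; try ring.
  rewrite IHp. ring.
Qed.
Lemma nth_padd p q k : nth k (padd p q) 0 = nth k p 0 + nth k q 0.
Proof.
  revert q k; induction p; intros q k; destruct q; destruct k; simpl; try ring; auto;
  destruct k; simpl; ring.
Qed.

Definition pscale (c : R) (p : list R) : list R := map (Rmult c) p.
Lemma peval_pscale c p x : peval (pscale c p) x = c * peval p x.
Proof. induction p; simpl; [ring|]. unfold pscale in *. simpl. rewrite IHp. ring. Qed.
Lemma nth_pscale c p k : nth k (pscale c p) 0 = c * nth k p 0.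
Proof. revert k; induction p; intros k; destruct k; simpl; try ring; auto. Qed.

Fixpoint pderiv (p : list R) : list R :=
  match p with [] => [] | a :: p' => padd p' (0 :: pderiv p') end.

Lemma peval_deriv p x : derivable_pt_lim (peval p) x (peval (pderiv p) x).
Proof.
  induction p.
  - simpl. apply (derivable_pt_lim_const 0).
  - simpl pderiv. rewrite peval_padd.
    replace (peval (a :: p)) with (fct_cte a + (id * peval p))%F.
    2:{ apply functional_extensionality; intro y. reflexivity. }
    assert (D : derivable_pt_lim (fct_cte a + id * peval p)%F x (0 + (1 * peval p x + id x * peval (pderiv p) x))).
    { apply derivable_pt_lim_plus; [apply derivable_pt_lim_const|].
      apply derivable_pt_lim_mult; auto. apply derivable_pt_lim_id. }
    replace (peval p x + peval (0 :: pderiv p) x) with (0 + (1 * peval p x + id x * peval (pderiv p) x)).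
    + exact D.
    + simpl. unfold id. ring.
Qed.

Lemma nth_pderiv p k : nth k (pderiv p) 0 = INR (S k) * nth (S k) p 0.
Proof.
  revert k; induction p; intros k.
  - destruct k; simpl; ring.
  - simpl pderiv. rewrite nth_padd. destruct k.
    + simpl. ring.
    + simpl nth at 2. rewrite IHp. simpl nth. rewrite (S_INR (S k)). ring.
Qed.

Lemma peval_cont p x : continuity_pt (peval p) x.
Proof. apply derivable_continuous_pt. exists (peval (pderiv p) x). apply peval_deriv. Qed.

Lemma peval_zero_uniq p : (forall x, peval p x = 0) -> forall j, nth j p 0 = 0.
Proof.
  induction p; intros H j.
  - destruct j; reflexivity.
  - assert (Ha : a = 0) by (specialize (H 0); simpl in H; lra).
    assert (Hp : forall x, peval p x = 0).
    { assert (Hnz : forall x, x <> 0 -> peval p x = 0).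
      { intros x Hx. specialize (H x). simpl in H. rewrite Ha in H.
        assert (x * peval p x = 0) by lra. apply Rmult_integral in H0 as [|]; auto; contradiction. }
      intros x. destruct (Req_dec x 0) as [->|Hx]; auto.
      destruct (Req_dec (peval p 0) 0) as [E|E]; auto. exfalso.
      pose proof (peval_cont p 0) as Hc.
      destruct (Hc (Rabs (peval p 0)) (Rabs_pos_lt _ E)) as [d [Hd Hd2]].
      assert (Hdd : d / 2 <> 0) by lra.
      specialize (Hd2 (d/2)). simpl in Hd2. unfold R_dist in Hd2.
      rewrite Hnz in Hd2 by auto. rewrite Rminus_0_l, Rabs_Ropp, Rminus_0_r in Hd2.
      assert (Rabs (d/2) < d) by (rewrite Rabs_right; lra).
      assert (Rabs (peval p 0) < Rabs (peval p 0)) by (apply Hd2; split; auto; unfold D_x, no_cond; split; auto).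
      lra. }
    destruct j; simpl; auto.
Qed.

Lemma coef_eq p q : (forall x, peval p x = peval q x) -> forall j, nth j p 0 = nth j q 0.
Proof.
  intros H j. pose proof (peval_zero_uniq (padd p (pscale (-1) q))) as U.
  assert (forall x, peval (padd p (pscale (-1) q)) x = 0) by (intros; rewrite peval_padd, peval_pscale, H; ring).
  specialize (U H0 j). rewrite nth_padd, nth_pscale in U. lra.
Qed.

Lemma coef_sumL {A} p (l : list A) (q : A -> list R) (c : A -> R) :
  (forall x, peval p x = sumL (fun y => peval (q y) x * c y) l) ->
  forall k, nth k p 0 = sumL (fun y => nth k (q y) 0 * c y) l.
Proof.
  intros H k.
  set (r := fold_right (fun y acc => padd (pscale (c y) (q y)) acc) [] l).
  assert (Hr : forall x, peval r x = sumL (fun y => peval (q y) x * c y) l).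
  { intros x. unfold r. clear. induction l; simpl; [reflexivity|].
    rewrite peval_padd, peval_pscale, IHl. unfold sumL; simpl. ring. }
  assert (Hn : nth k r 0 = sumL (fun y => nth k (q y) 0 * c y) l).
  { unfold r. clear. induction l; simpl; [destruct k; reflexivity|].
    rewrite nth_padd, nth_pscale, IHl. unfold sumL; simpl. ring. }
  rewrite <- Hn. apply coef_eq. intros; rewrite H, Hr; reflexivity.
Qed.

Lemma coef_ss p n (al : nat -> R) :
  (forall x, peval p x = ss n (fun j => al j * x ^ j)) -> forall j, (j < n)%nat -> nth j p 0 = al j.
Proof.
  intros H j Hj.
  set (r := map al (seq 0 n)).
  assert (Hr : forall n (al : nat -> R) x, peval (map al (seq 0 n)) x = ss n (fun j => al j * x ^ j)).
  { clear. induction n; intros al x; simpl; [reflexivity|].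
    rewrite <- seq_shift, map_map, IHn, <- ss_scal. f_equal; [ring|]. apply ss_ext. intros; simpl; ring. }
  rewrite (coef_eq p r) by (intros; unfold r; rewrite Hr, H; reflexivity).
  unfold r. rewrite nth_indep with (d' := al 0%nat) by (rewrite length_map, length_seq; auto).
  rewrite map_nth, seq_nth by auto. reflexivity.
Qed.

Definition HPtype (F : R -> R) (mu : R) (Pinv : R -> forest -> R) (P : forest -> list R) : Prop :=
  forall (w : forest) (s : R), 0 < s ->
       limit1_in (fun z => conv (Pinv z) (phi F s z) w) (fun z => 0 < z)
                 (peval (P w) (ln (s / mu))) 0.

Lemma ln_shift mu a : 0 < mu -> ln (mu * exp a / mu) = a.
Proof. intros H. replace (mu * exp a / mu) with (exp a) by (field; lra). apply ln_exp. Qed.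

Lemma HP' F mu Pinv P : 0 < mu -> HPtype F mu Pinv P ->
  forall v a, cv0 (fun z => conv (Pinv z) (phi F (mu * exp a) z) v) (peval (P v) a).
Proof.
  intros Hmu HP v a. pose proof (HP v (mu * exp a)) as H.
  rewrite ln_shift in H by auto. apply H. apply Rmult_lt_0_compat; auto; apply exp_pos.
Qed.

Lemma exp_cont x : continuity_pt exp x.
Proof. apply derivable_continuous_pt. exists (exp x). apply derivable_pt_lim_exp. Qed.

Lemma cv0_exp_lin c : cv0 (fun z => exp (z * c)) 1.
Proof.
  rewrite <- exp_0. apply (cv0_comp (fun z => z * c) exp 0).
  - assert (H : cv0 (fun z => z * c) (0 * c)) by (apply cv0_mult; [apply cv0_id|apply cv0_const]).
    rewrite Rmult_0_l in H. exact H.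
  - apply exp_cont.
Qed.

Lemma P_at0 F mu Pinv P : 0 < mu -> (forall z w, conv (Pinv z) (phi F mu z) w = counit w) ->
  HPtype F mu Pinv P -> forall v, peval (P v) 0 = counit v.
Proof.
  intros Hmu Hinv HP v. pose proof (HP' F mu Pinv P Hmu HP v 0) as H.
  rewrite exp_0, Rmult_1_r in H. apply (cv0_unique _ _ _ H).
  apply (cv0_ext_all (fun _ => counit v)); [intros; rewrite Hinv; auto | apply cv0_const].
Qed.

Lemma P_group F mu Pinv P : 0 < mu -> (forall z w, conv (Pinv z) (phi F mu z) w = counit w) ->
  HPtype F mu Pinv P -> forall a b v,
  peval (P v) (a + b) = sumL (fun p => peval (P (fst p)) a * peval (P (snd p)) b) (cop v).
Proof.
  intros Hmu Hinv HP a b v.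
  pose proof (HP' F mu Pinv P Hmu HP v (a + b)) as H.
  apply (cv0_unique _ _ _ H).
  apply (cv0_ext_all (fun z => sumL (fun p => conv (Pinv z) (phi F (mu * exp a) z) (fst p) *
                   (exp (- (z * a) * INR (fsize (snd p))) * conv (Pinv z) (phi F (mu * exp b) z) (snd p))) (cop v))).
  { intros z _. symmetry. apply group_law_z; auto. }
  apply cv0_sumL. intros p _.
  replace (peval (P (fst p)) a * peval (P (snd p)) b) with (peval (P (fst p)) a * (1 * peval (P (snd p)) b)) by ring.
  apply cv0_mult; [apply HP'; auto|]. apply cv0_mult; [|apply HP'; auto].
  apply (cv0_ext_all (fun z => exp (z * (- a * INR (fsize (snd p)))))); [intros; f_equal; ring|].
  apply cv0_exp_lin.
Qed.

Lemma deriv_shift q a : derivable_pt_lim (fun b => peval q (a + b)) 0 (peval (pderiv q) a).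
Proof.
  intros eps He. destruct (peval_deriv q a eps He) as [d Hd]. exists d. intros h H1 H2.
  rewrite Rplus_0_l, Rplus_0_r. apply Hd; auto.
Qed.

Lemma deriv_sumL {A} (Fn : A -> R -> R) (D : A -> R) l y :
  (forall x, In x l -> derivable_pt_lim (Fn x) y (D x)) ->
  derivable_pt_lim (fun b => sumL (fun x => Fn x b) l) y (sumL D l).
Proof.
  induction l; intros H.
  - unfold sumL; simpl. apply (derivable_pt_lim_const 0).
  - replace (fun b => sumL (fun x => Fn x b) (a :: l)) with (Fn a + (fun b => sumL (fun x => Fn x b) l))%F.
    2:{ apply functional_extensionality; intro; reflexivity. }
    rewrite sumL_cons. apply derivable_pt_lim_plus.
    + apply H; simpl; auto.
    + apply IHl. intros; apply H; simpl; auto.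
Qed.

Lemma peval_at0 q : peval q 0 = nth 0 q 0.
Proof. destruct q; simpl; ring. Qed.

Lemma P_deriv_rel F mu Pinv P : 0 < mu -> (forall z w, conv (Pinv z) (phi F mu z) w = counit w) ->
  HPtype F mu Pinv P -> forall v k,
  INR (S k) * nth (S k) (P v) 0 = sumL (fun p => nth k (P (fst p)) 0 * nth 1 (P (snd p)) 0) (cop v).
Proof.
  intros Hmu Hinv HP v k. rewrite <- nth_pderiv.
  apply (coef_sumL _ (cop v) (fun p => P (fst p)) (fun p => nth 1 (P (snd p)) 0)).
  intros a. apply (uniqueness_limite (fun b => peval (P v) (a + b)) 0).
  - apply deriv_shift.
  - replace (fun b => peval (P v) (a + b)) with
      (fun b => sumL (fun p => mult_real_fct (peval (P (fst p)) a) (peval (P (snd p))) b) (cop v)).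
    2:{ apply functional_extensionality; intro b. rewrite (P_group F mu Pinv P); auto. }
    apply deriv_sumL. intros p _.
    replace (peval (P (fst p)) a * nth 1 (P (snd p)) 0) with (peval (P (fst p)) a * peval (pderiv (P (snd p))) 0).
    + apply derivable_pt_lim_scal. apply peval_deriv.
    + rewrite peval_at0, nth_pderiv. simpl (INR 1). ring.
Qed.

Definition pik (P : forest -> list R) (k : nat) (v : forest) : R :=
  INR (Factorial.fact k) * (-1) ^ k * nth k (P v) 0.

Lemma pik_pow F mu Pinv P : 0 < mu -> (forall z w, conv (Pinv z) (phi F mu z) w = counit w) ->
  HPtype F mu Pinv P -> forall k v,
  pik P k v = conv_pow (fun w => - partial0 (P w)) k v.
Proof.
  intros Hmu Hinv HP k. induction k; intros v.
  - unfold pik. simpl. rewrite <- peval_at0, (P_at0 F mu Pinv P); auto. ring.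
  - simpl conv_pow. rewrite <- conv_pow_comm.
    assert (E : pik P k = conv_pow (fun w => - partial0 (P w)) k) by (apply functional_extensionality; auto).
    rewrite <- E. unfold pik at 1. rewrite fact_simpl, mult_INR.
    transitivity (INR (Factorial.fact k) * (-1) ^ (S k) * (INR (S k) * nth (S k) (P v) 0)); [ring|].
    rewrite (P_deriv_rel F mu Pinv P); auto. rewrite conv_sumL, <- sumL_scal_l.
    apply sumL_ext. intros p _. unfold pik, partial0. simpl pow. ring.
Qed.

Lemma cv0_nonzero f l : cv0 f l -> l <> 0 -> exists d, 0 < d /\ forall z, 0 < z < d -> f z <> 0.
Proof.
  intros H Hl. rewrite cv0_def in H. destruct (H (Rabs l) (Rabs_pos_lt _ Hl)) as [d [Hd H1]].
  exists d; split; auto. intros z Hz E. specialize (H1 z Hz). rewrite E, Rminus_0_l, Rabs_Ropp in H1. lra.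
Qed.

Lemma tri n : forall (M : R -> nat -> nat -> R) (K d : R -> nat -> R) (M0 : nat -> nat -> R) (d0 : nat -> R),
  (exists de, 0 < de /\ forall z, 0 < z < de -> forall i, (i < n)%nat -> d z i = ss n (fun j => M z i j * K z j)) ->
  (forall i j, (i < n)%nat -> (j < n)%nat -> cv0 (fun z => M z i j) (M0 i j)) ->
  (forall i, (i < n)%nat -> cv0 (fun z => d z i) (d0 i)) ->
  (forall i j, (j < i)%nat -> (i < n)%nat -> M0 i j = 0) ->
  (forall i, (i < n)%nat -> M0 i i <> 0) ->
  forall j, (j < n)%nat -> exists l, cv0 (fun z => K z j) l.
Proof.
  induction n; intros M K d M0 d0 [de [Hde Hsys]] HM Hd Htri Hdiag j Hj; [lia|].
  destruct (cv0_nonzero _ _ (HM 0%nat 0%nat ltac:(lia) ltac:(lia)) (Hdiag 0%nat ltac:(lia))) as [d1 [Hd1 Hnz]].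
  set (M' := fun z i j => M z (S i) (S j) - M z (S i) 0%nat * M z 0%nat (S j) / M z 0%nat 0%nat).
  set (d' := fun z i => d z (S i) - M z (S i) 0%nat * d z 0%nat / M z 0%nat 0%nat).
  set (K' := fun z j => K z (S j)).
  assert (Hrest : forall j, (j < n)%nat -> exists l, cv0 (fun z => K' z j) l).
  { apply (IHn M' K' d' (fun i j => M0 (S i) (S j)) (fun i => d0 (S i))).
    - exists (Rmin de d1). split; [apply Rmin_pos; auto|]. intros z Hz i Hi.
      pose proof (Rmin_l de d1); pose proof (Rmin_r de d1).
      assert (Hz1 : 0 < z < de) by lra. assert (Hz2 : 0 < z < d1) by lra.
      specialize (Hnz z Hz2).
      rewrite (ss_ext n (fun j0 => M' z i j0 * K' z j0)
        (fun j0 => M z (S i) (S j0) * K z (S j0) - (M z (S i) 0%nat / M z 0%nat 0%nat) * (M z 0%nat (S j0) * K z (S j0))))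
        by (intros; unfold M', K'; field; auto).
      rewrite ss_minus, ss_scal. unfold d'.
      rewrite (Hsys z Hz1 (S i)) by lia. rewrite (Hsys z Hz1 0%nat) by lia.
      simpl. field. auto.
    - intros i k Hi Hk. unfold M'.
      replace (M0 (S i) (S k)) with (M0 (S i) (S k) - M0 (S i) 0%nat * M0 0%nat (S k) / M0 0%nat 0%nat)
        by (rewrite (Htri (S i) 0%nat) by lia; field; apply Hdiag; lia).
      apply cv0_minus; [apply HM; lia|]. apply cv0_div; [apply cv0_mult; apply HM; lia|apply HM; lia|apply Hdiag; lia].
    - intros i Hi. unfold d'.
      replace (d0 (S i)) with (d0 (S i) - M0 (S i) 0%nat * d0 0%nat / M0 0%nat 0%nat)
        by (rewrite (Htri (S i) 0%nat) by lia; field; apply Hdiag; lia).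
      apply cv0_minus; [apply Hd; lia|]. apply cv0_div; [apply cv0_mult; [apply HM; lia|apply Hd; lia]|apply HM; lia|apply Hdiag; lia].
    - intros; apply Htri; lia.
    - intros; apply Hdiag; lia. }
  destruct j as [|j].
  -
    assert (Hch : forall m, (m <= n)%nat -> exists f : nat -> R, forall k, (k < m)%nat -> cv0 (fun z => K' z k) (f k)).
    { induction m; intros Hm.
      - exists (fun _ => 0). intros; lia.
      - destruct (IHm ltac:(lia)) as [f Hf]. destruct (Hrest m ltac:(lia)) as [l Hl].
        exists (fun k => if Nat.eq_dec k m then l else f k). intros k Hk.
        destruct (Nat.eq_dec k m); [subst; auto|]. apply Hf; lia. }
    destruct (Hch n (le_n n)) as [f Hf].
    exists ((d0 0%nat - ss n (fun k => M0 0%nat (S k) * f k)) / M0 0%nat 0%nat).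
    apply (cv0_ext (fun z => (d z 0%nat - ss n (fun k => M z 0%nat (S k) * K' z k)) / M z 0%nat 0%nat)).
    + exists (Rmin de d1). split; [apply Rmin_pos; auto|]. intros z Hz.
      pose proof (Rmin_l de d1); pose proof (Rmin_r de d1).
      assert (Hz1 : 0 < z < de) by lra. assert (Hz2 : 0 < z < d1) by lra.
      rewrite (Hsys z Hz1 0%nat) by lia. simpl. unfold K'. field. apply Hnz; auto.
    + apply cv0_div; [|apply HM; lia|apply Hdiag; lia].
      apply cv0_minus; [apply Hd; lia|]. apply cv0_ss. intros k Hk. apply cv0_mult; [apply HM; lia|apply Hf; auto].
  - apply (Hrest j). lia.
Qed.

Definition tau (z b : R) : R := (exp (- (z * b)) - 1) / z.

Lemma tau_cv b : cv0 (fun z => tau z b) (- b).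
Proof.
  destruct (Req_dec b 0) as [->|Hb].
  - apply (cv0_ext_all (fun _ => 0)); [intros z Hz; unfold tau; rewrite Rmult_0_r, Ropp_0, exp_0; field; lra|].
    rewrite Ropp_0. apply cv0_const.
  - rewrite cv0_def. intros eps He.
    assert (Hb' : 0 < Rabs b) by (apply Rabs_pos_lt; auto).
    destruct (derivable_pt_lim_exp_0 (eps / Rabs b) ltac:(apply Rdiv_lt_0_compat; lra)) as [d Hd].
    exists (d / Rabs b). split; [apply Rdiv_lt_0_compat; auto; apply cond_pos|].
    intros z [Hz1 Hz2]. set (h := - (z * b)).
    assert (Hh : h <> 0) by (unfold h; intro E; apply Hb; nra).
    assert (Hh2 : Rabs h < d).
    { unfold h. rewrite Rabs_Ropp, Rabs_mult, Rabs_right by lra.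
      apply (Rmult_lt_compat_r (Rabs b)) in Hz2; auto. unfold Rdiv in Hz2.
      rewrite Rmult_assoc, Rinv_l, Rmult_1_r in Hz2; lra. }
    specialize (Hd h Hh Hh2). rewrite Rplus_0_l, exp_0 in Hd.
    unfold tau. fold h.
    replace ((exp h - 1) / z - - b) with ((- b) * ((exp h - 1) / h - 1)).
    2:{ unfold h. field. split; auto. lra. }
    rewrite Rabs_mult, Rabs_Ropp.
    apply (Rmult_lt_compat_l (Rabs b)) in Hd; auto.
    replace (Rabs b * (eps / Rabs b)) with eps in Hd by (field; lra). exact Hd.
Qed.

Definition coefz (F : R -> R) (mu : R) (Pinv : R -> forest -> R) (z : R) (p : forest * forest) : R :=
  Pinv z (fst p) * phi F mu z (snd p).
Definition aL F mu Pinv (v : forest) (g : nat -> R) (z : R) : R :=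
  sumL (fun p => coefz F mu Pinv z p * g (fsize (snd p))) (cop v).

Lemma E_expand F mu Pinv v z b : 0 < mu -> 0 < z ->
  conv (Pinv z) (phi F (mu * exp b) z) v =
  ss (S (fsize v)) (fun j => (z ^ j * aL F mu Pinv v (fun m => bin m j) z) * tau z b ^ j).
Proof.
  intros Hmu Hz. rewrite conv_sumL.
  rewrite (sumL_ext _ (fun p => coefz F mu Pinv z p * exp ((- (z * b)) * INR (fsize (snd p))))).
  2:{ intros p _. rewrite phi_shift by auto. unfold coefz. ring. }
  assert (Hs : forall p, In p (cop v) -> (fsize (snd p) <= fsize v)%nat).
  { intros p Hp. pose proof (size_cop v p Hp). lia. }
  pose proof (L_expand (cop v) (coefz F mu Pinv z) (fun p => fsize (snd p)) (fsize v) (fun x => exp ((- (z * b)) * x)) Hs) as LE.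
  cbv beta in LE. rewrite LE.
  apply ss_ext. intros j _. rewrite DI_exp, Rmult_0_r, exp_0, Rmult_1_l.
  unfold aL. replace (exp (- (z * b)) - 1) with (z * tau z b) by (unfold tau; field; lra).
  rewrite Rpow_mult_distr. ring.
Qed.

Lemma finite_choice n (Q : nat -> R -> Prop) :
  (forall j, (j < n)%nat -> exists l, Q j l) -> exists f : nat -> R, forall j, (j < n)%nat -> Q j (f j).
Proof.
  induction n; intros H.
  - exists (fun _ => 0). intros; lia.
  - destruct IHn as [f Hf]; [intros; apply H; lia|]. destruct (H n ltac:(lia)) as [l Hl].
    exists (fun k => if Nat.eq_dec k n then l else f k). intros k Hk.
    destruct (Nat.eq_dec k n); [subst; auto|]. apply Hf; lia.
Qed.

Lemma lemmaA F mu Pinv P : 0 < mu -> HPtype F mu Pinv P ->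
  forall v j, (j <= fsize v)%nat ->
  cv0 (fun z => z ^ j * aL F mu Pinv v (fun m => bin m j) z) ((-1) ^ j * nth j (P v) 0).
Proof.
  intros Hmu HP v.
  set (n := S (fsize v)).
  set (K := fun z j => z ^ j * aL F mu Pinv v (fun m => bin m j) z).
  set (E := fun z b => conv (Pinv z) (phi F (mu * exp b) z) v).
  assert (HE : forall z b, 0 < z -> E z b = ss n (fun j => K z j * tau z b ^ j)).
  { intros; apply E_expand; auto. }
  assert (Hconv : forall j, (j < n)%nat -> exists l, cv0 (fun z => K z j) l).
  { apply (tri n (fun z i j => DI i (fun b => tau z b ^ j) 0) K (fun z i => DI i (E z) 0)
              (fun i j => DI i (fun b => (- b) ^ j) 0) (fun i => DI i (peval (P v)) 0)).
    - exists 1. split; [lra|]. intros z Hz i Hi.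
      rewrite (DI_ext i (E z) (fun b => ss n (fun j => K z j * tau z b ^ j))) by (intros; apply HE; lra).
      rewrite DI_ss. apply ss_ext. intros; ring.
    - intros i j _ _. apply DI_cv. intros b. apply cv0_pow, tau_cv.
    - intros i _. apply DI_cv. intros b. apply HP'; auto.
    - intros i j Hji _.
      rewrite (DI_ext i _ (fun b => (-1) ^ j * (b + 0) ^ j)) by (intros; rewrite Rplus_0_r, <- Rpow_mult_distr; f_equal; ring).
      rewrite DI_scal, (proj1 (DI_pow i j 0 0)) by auto. ring.
    - intros i _.
      rewrite (DI_ext i _ (fun b => (-1) ^ i * (b + 0) ^ i)) by (intros; rewrite Rplus_0_r, <- Rpow_mult_distr; f_equal; ring).
      rewrite DI_scal, (proj2 (DI_pow i i 0 0)).
      apply Rmult_integral_contrapositive. split; [apply pow_nonzero; lra| apply INR_fact_neq_0]. }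
  destruct (finite_choice n (fun j l => cv0 (fun z => K z j) l) Hconv) as [f Hf].
  assert (Hpe : forall b, peval (P v) b = ss n (fun j => (f j * (-1) ^ j) * b ^ j)).
  { intros b. apply (cv0_unique (fun z => E z b)).
    - apply HP'; auto.
    - apply (cv0_ext_all (fun z => ss n (fun j => K z j * tau z b ^ j))); [intros; rewrite HE; auto|].
      rewrite (ss_ext n _ (fun j => f j * (- b) ^ j)).
      + apply cv0_ss. intros j Hj. apply cv0_mult; [apply Hf; auto|]. apply cv0_pow, tau_cv.
      + intros j _. replace (- b) with ((-1) * b) by ring. rewrite Rpow_mult_distr. ring. }
  intros j Hj. assert (Hjn : (j < n)%nat) by (unfold n; lia).
  rewrite (coef_ss (P v) n _ Hpe j Hjn).
  replace ((-1) ^ j * (f j * (-1) ^ j)) with (f j * ((-1) * (-1)) ^ j) by (rewrite Rpow_mult_distr; ring).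
  replace ((-1) * (-1)) with 1 by ring. rewrite pow1, Rmult_1_r. apply Hf; auto.
Qed.

Lemma series_terms_bounded (s : nat -> R) l : infinite_sum s l -> exists B, forall n, Rabs (s n) <= B.
Proof.
  intros H. destruct (H 1 ltac:(lra)) as [N0 HN]. unfold R_dist in HN.
  exists (2 + sum_f_R0 (fun k => Rabs (s k)) N0). intros n.
  assert (Hpos : forall m, 0 <= sum_f_R0 (fun k => Rabs (s k)) m).
  { induction m; simpl; [apply Rabs_pos|]. pose proof (Rabs_pos (s (S m))). lra. }
  destruct (Compare_dec.le_lt_dec n N0) as [Hn|Hn].
  - assert (Rabs (s n) <= sum_f_R0 (fun k => Rabs (s k)) N0).
    { clear HN H. induction N0.
      - assert (n = 0%nat) by lia. subst. simpl. lra.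
      - destruct (Nat.eq_dec n (S N0)) as [->|Hne].
        + simpl. pose proof (Hpos N0). lra.
        + simpl. pose proof (Rabs_pos (s (S N0))). assert (Rabs (s n) <= sum_f_R0 (fun k => Rabs (s k)) N0) by (apply IHN0; lia). lra. }
    lra.
  - destruct n as [|n]; [lia|].
    pose proof (HN (S n) ltac:(lia)) as H1. pose proof (HN n ltac:(lia)) as H2.
    simpl in H1. replace (s (S n)) with ((sum_f_R0 s n + s (S n) - l) - (sum_f_R0 s n - l)) by ring.
    pose proof (Rabs_triang (sum_f_R0 s n + s (S n) - l) (- (sum_f_R0 s n - l))). rewrite Rabs_Ropp in H0.
    pose proof (Hpos N0). unfold Rminus at 1. lra.
Qed.

Lemma pser_rem (c : nat -> R) (G : R -> R) (r : R) (N : nat) :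
  0 < r -> (forall y, 0 < y < r -> Pser c y (G y)) ->
  exists y0 B, 0 < y0 /\ forall y, 0 < y <= y0 ->
    Rabs (G y - ss (S N) (fun k => c k * y ^ k)) <= B * y ^ (S N).
Proof.
  intros Hr HG. set (x1 := r / 2).
  assert (Hx1 : 0 < x1 < r) by (unfold x1; lra).
  destruct (series_terms_bounded (fun n => c n * x1 ^ n) (G x1) (HG x1 Hx1)) as [B1 HB1].
  assert (HB1p : 0 <= B1) by (specialize (HB1 0%nat); pose proof (Rabs_pos (c 0%nat * x1 ^ 0)); lra).
  exists (x1 / 2), (2 * B1 / x1 ^ (S N)). split; [lra|]. intros y Hy.
  set (q := y / x1).
  assert (Hq : 0 < q <= 1/2).
  { unfold q. split; [apply Rdiv_lt_0_compat; lra|].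
    apply (Rmult_le_reg_r x1); [lra|]. unfold Rdiv. rewrite Rmult_assoc, Rinv_l; lra. }
  assert (Hterm : forall k, Rabs (c k * y ^ k) <= B1 * q ^ k).
  { intros k. replace (c k * y ^ k) with ((c k * x1 ^ k) * q ^ k).
    - rewrite Rabs_mult, (Rabs_right (q ^ k)) by (apply Rle_ge, pow_le; lra).
      apply Rmult_le_compat_r; [apply pow_le; lra|apply HB1].
    - unfold q.
      replace (y ^ k) with ((x1 * (y / x1)) ^ k) by (f_equal; field; lra).
      rewrite Rpow_mult_distr. ring. }
  assert (Htail : forall i, Rabs (sum_f_R0 (fun k => c k * y ^ k) (N + i) - sum_f_R0 (fun k => c k * y ^ k) N)
                      <= B1 * q ^ (S N) * (1 - q ^ i) / (1 - q)).
  { induction i.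
    - rewrite Nat.add_0_r, Rminus_diag, Rabs_R0. simpl. rewrite Rminus_diag. unfold Rdiv. lra.
    - rewrite Nat.add_succ_r.
      assert (E : sum_f_R0 (fun k => c k * y ^ k) (S (N + i)) =
                  sum_f_R0 (fun k => c k * y ^ k) (N + i) + c (S (N + i)) * y ^ S (N + i)) by reflexivity.
      rewrite E.
      pose proof (Rabs_triang (sum_f_R0 (fun k => c k * y ^ k) (N + i) - sum_f_R0 (fun k => c k * y ^ k) N)
                              (c (S (N + i)) * y ^ S (N + i))) as T.
      replace (sum_f_R0 (fun k => c k * y ^ k) (N + i) - sum_f_R0 (fun k => c k * y ^ k) N + c (S (N + i)) * y ^ S (N + i))
        with (sum_f_R0 (fun k => c k * y ^ k) (N + i) + c (S (N + i)) * y ^ S (N + i) - sum_f_R0 (fun k => c k * y ^ k) N) in T by ring.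
      pose proof (Hterm (S (N + i))).
      replace (B1 * q ^ S N * (1 - q ^ S i) / (1 - q)) with (B1 * q ^ S N * (1 - q ^ i) / (1 - q) + B1 * q ^ S (N + i)).
      + lra.
      + replace (S (N + i)) with (S N + i)%nat by lia. rewrite pow_add. simpl. field. lra. }
  assert (Hbound : forall i, Rabs (sum_f_R0 (fun k => c k * y ^ k) (N + i) - sum_f_R0 (fun k => c k * y ^ k) N)
                      <= 2 * B1 * q ^ (S N)).
  { intros i. eapply Rle_trans; [apply Htail|].
    assert (0 < q ^ i) by (apply pow_lt; lra). assert (0 < q ^ S N) by (apply pow_lt; lra).
    set (t := / (1 - q)). assert (Ht : t * (1 - q) = 1) by (unfold t; field; lra).
    assert (Ht0 : 0 < t) by (unfold t; apply Rinv_0_lt_compat; lra).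
    assert (Ht2 : t <= 2) by nra.
    set (A := B1 * q ^ S N). assert (HA : 0 <= A) by (unfold A; apply Rmult_le_pos; lra).
    unfold Rdiv. fold t. fold A. replace (2 * B1 * q ^ S N) with (2 * A) by (unfold A; ring).
    assert (0 <= A * q ^ i * t) by (apply Rmult_le_pos; [apply Rmult_le_pos|]; lra).
    assert (A * t <= A * 2) by (apply Rmult_le_compat_l; lra). nra. }
  assert (HGy : Pser c y (G y)) by (apply HG; lra).
  rewrite <- sum_f_ss.
  replace (2 * B1 / x1 ^ S N * y ^ S N) with (2 * B1 * q ^ S N).
  2:{ unfold q. unfold Rdiv. rewrite Rpow_mult_distr, pow_inv. ring. }
  apply Rnot_lt_le. intros Hlt.
  set (eps := Rabs (G y - sum_f_R0 (fun k => c k * y ^ k) N) - 2 * B1 * q ^ S N).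
  destruct (HGy eps ltac:(unfold eps; lra)) as [N0 HN0]. unfold R_dist in HN0.
  specialize (HN0 (N + N0)%nat ltac:(lia)). specialize (Hbound N0).
  pose proof (Rabs_triang (sum_f_R0 (fun k => c k * y ^ k) (N + N0) - G y)
               (- (sum_f_R0 (fun k => c k * y ^ k) (N + N0) - sum_f_R0 (fun k => c k * y ^ k) N))).
  rewrite Rabs_Ropp in H.
  replace (sum_f_R0 (fun k => c k * y ^ k) (N + N0) - G y + - (sum_f_R0 (fun k => c k * y ^ k) (N + N0) - sum_f_R0 (fun k => c k * y ^ k) N))
    with (- (G y - sum_f_R0 (fun k => c k * y ^ k) N)) in H by ring.
  rewrite Rabs_Ropp in H. unfold eps in HN0. lra.
Qed.

Lemma cv0_squeeze f g : cv0 g 0 -> (exists d, 0 < d /\ forall z, 0 < z < d -> Rabs (f z) <= g z) -> cv0 f 0.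
Proof.
  intros Hg [d0 [Hd0 Hb]]. rewrite cv0_def in *. intros eps He.
  destruct (Hg eps He) as [d [Hd H]]. exists (Rmin d d0). split; [apply Rmin_pos; auto|].
  intros z Hz. pose proof (Rmin_l d d0); pose proof (Rmin_r d d0).
  specialize (H z ltac:(lra)). specialize (Hb z ltac:(lra)). rewrite Rminus_0_r in *.
  pose proof (Rle_abs (g z)). lra.
Qed.

Lemma fp_eq (G : nat -> R) l : (fix fp (l : list tree) : R :=
         match l with [] => 1 | u :: l' => tprod G u * fp l' end) l = fprod G l.
Proof. induction l; simpl; auto. Qed.

Lemma tprod_Node G ws : tprod G (Node ws) = G (S (fsize ws)) * fprod G ws.
Proof. rewrite <- fsize_Node, <- fp_eq. reflexivity. Qed.

Lemma phi_Node F mu z p2 : 0 < mu ->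
  phi F mu z [Node p2] = Rpower mu (- z) * F (z * INR (S (fsize p2))) * phi F mu z p2.
Proof.
  intros Hmu. unfold phi. rewrite fsize_single, fsize_Node.
  unfold fprod at 1. cbn [fold_right]. rewrite tprod_Node.
  replace (- (z * INR (S (fsize p2)))) with (- z + - (z * INR (fsize p2))) by (rewrite S_INR; ring).
  rewrite Rpower_plus. ring.
Qed.

Lemma bplus_step F mu Pinv w z : 0 < mu -> 0 < z ->
  z ^ 1 * aL F mu Pinv [Node w] (fun m => bin m 1) z =
  Rpower mu (- z) * aL F mu Pinv w (fun m => (z * INR (S m)) * F (z * INR (S m))) z.
Proof.
  intros Hmu Hz. unfold aL. rewrite cop_single, cop_t_Node, sumL_cons, sumL_map.
  cbn [fst snd]. unfold fsize at 1. simpl fold_right. rewrite bin_1. simpl INR at 1.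
  rewrite Rmult_0_r, Rplus_0_l, <- !sumL_scal_l. apply sumL_ext. intros p _.
  unfold coefz. cbn [fst snd]. rewrite phi_Node by auto. rewrite bin_1, fsize_single, fsize_Node. ring.
Qed.

Lemma aL_plus F mu Pinv w g1 g2 z :
  aL F mu Pinv w (fun m => g1 m + g2 m) z = aL F mu Pinv w g1 z + aL F mu Pinv w g2 z.
Proof. unfold aL. rewrite <- sumL_plus. apply sumL_ext. intros; ring. Qed.

Lemma aL_expand F mu Pinv w (h : R -> R) z :
  aL F mu Pinv w (fun m => h (INR m)) z =
  ss (S (fsize w)) (fun j => DI j h 0 * aL F mu Pinv w (fun m => bin m j) z).
Proof.
  unfold aL. apply (L_expand (cop w) (coefz F mu Pinv z) (fun p => fsize (snd p)) (fsize w) h).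
  intros p Hp. pose proof (size_cop w p Hp). lia.
Qed.

Lemma aL_ss F mu Pinv w n (Gk : nat -> nat -> R) z :
  aL F mu Pinv w (fun m => ss n (fun k => Gk k m)) z = ss n (fun k => aL F mu Pinv w (fun m => Gk k m) z).
Proof.
  unfold aL. rewrite <- ss_sumL. apply sumL_ext. intros p _. rewrite <- ss_scal. reflexivity.
Qed.

Lemma poly_part F mu Pinv P c w : 0 < mu -> HPtype F mu Pinv P ->
  cv0 (fun z => aL F mu Pinv w (fun m => ss (S (fsize w)) (fun k => c k * (z * INR (S m)) ^ k)) z)
      (ss (S (fsize w)) (fun k => c k * pik P k w)).
Proof.
  intros Hmu HP. set (N := fsize w).
  set (D := fun j k => DI j (fun x => (x + 1) ^ k) 0).
  set (K := fun z j => z ^ j * aL F mu Pinv w (fun m => bin m j) z).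
  apply (cv0_ext_all (fun z => ss (S N) (fun k => c k *
           ss (S N) (fun j => if Compare_dec.le_dec j k then z ^ (k - j) * D j k * K z j else 0)))).
  { intros z Hz. rewrite aL_ss. apply ss_ext. intros k Hk.
    transitivity (c k * (z ^ k * aL F mu Pinv w (fun m => (INR m + 1) ^ k) z)).
    - pose proof (aL_expand F mu Pinv w (fun x => (x + 1) ^ k) z) as AE. cbv beta in AE.
      rewrite AE. rewrite <- !ss_scal. apply ss_ext. intros j Hj.
      destruct (Compare_dec.le_dec j k) as [Hjk|Hjk].
      + unfold K, D. replace (z ^ k) with (z ^ (k - j) * z ^ j) by (rewrite <- pow_add; f_equal; lia). ring.
      + unfold D. rewrite (proj1 (DI_pow j k 1 0)) by lia. ring.
    - unfold aL. rewrite <- sumL_scal_l, <- sumL_scal_l. apply sumL_ext. intros p _.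
      rewrite S_INR, Rpow_mult_distr. ring. }
  apply cv0_ss. intros k Hk.
  apply cv0_scal.
  replace (pik P k w) with (ss (S N) (fun j => if Compare_dec.le_dec j k then (if Nat.eq_dec j k then D k k * ((-1) ^ k * nth k (P w) 0) else 0) else 0)).
  2:{ rewrite (ss_single (S N) k); [| lia |].
      - destruct (Compare_dec.le_dec k k); [|lia]. destruct (Nat.eq_dec k k); [|lia].
        unfold pik, D. rewrite (proj2 (DI_pow k 0 1 0)). ring.
      - intros j Hj Hne. destruct (Compare_dec.le_dec j k); auto. destruct (Nat.eq_dec j k); auto; lia. }
  apply cv0_ss. intros j Hj. destruct (Compare_dec.le_dec j k) as [Hjk|Hjk]; [|apply cv0_const].
  assert (HK : cv0 (fun z => K z j) ((-1) ^ j * nth j (P w) 0)) by (apply lemmaA; auto; unfold N in Hj; lia).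
  destruct (Nat.eq_dec j k) as [->|Hne].
  - rewrite Nat.sub_diag. simpl pow.
    rewrite <- (Rmult_1_l (D k k * ((-1) ^ k * nth k (P w) 0))), <- Rmult_assoc.
    apply cv0_mult; [apply cv0_mult; apply cv0_const|]. auto.
  - replace 0 with (0 ^ (k - j) * D j k * ((-1) ^ j * nth j (P w) 0)).
    + apply cv0_mult; auto. apply cv0_mult; [|apply cv0_const]. apply cv0_pow, cv0_id.
    + replace (k - j)%nat with (S (k - j - 1)) by lia. simpl. ring.
Qed.

Lemma rem_part F mu Pinv P c (r : R) w : 0 < mu -> HPtype F mu Pinv P -> 0 < r ->
  (forall y, 0 < y < r -> Pser c y (y * F y)) ->
  cv0 (fun z => aL F mu Pinv w (fun m => (z * INR (S m)) * F (z * INR (S m)) -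
         ss (S (fsize w)) (fun k => c k * (z * INR (S m)) ^ k)) z) 0.
Proof.
  intros Hmu HP Hr HL. set (N := fsize w).
  set (Rm := fun y => y * F y - ss (S N) (fun k => c k * y ^ k)).
  destruct (pser_rem c (fun y => y * F y) r N Hr HL) as [y0 [B [Hy0 HB]]].
  assert (HB0 : 0 <= B).
  { specialize (HB y0 ltac:(lra)). pose proof (Rabs_pos (y0 * F y0 - ss (S N) (fun k => c k * y0 ^ k))).
    assert (0 < y0 ^ S N) by (apply pow_lt; lra). nra. }
  set (K := fun z j => z ^ j * aL F mu Pinv w (fun m => bin m j) z).
  apply (cv0_ext_all (fun z => ss (S N) (fun j => (DI j (fun x => Rm (z * (x + 1))) 0 / z ^ j) * K z j))).
  { intros z Hz.
    transitivity (aL F mu Pinv w (fun m => (fun x => Rm (z * (x + 1))) (INR m)) z).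
    - pose proof (aL_expand F mu Pinv w (fun x => Rm (z * (x + 1))) z) as AE. cbv beta in AE.
      rewrite AE. apply ss_ext. intros j _. unfold K. field. apply pow_nonzero; lra.
    - unfold aL. apply sumL_ext. intros p _. unfold Rm. rewrite S_INR. reflexivity. }
  match goal with |- cv0 ?f _ =>
    assert (H0 : cv0 f (ss (S N) (fun j => 0 * ((-1) ^ j * nth j (P w) 0)))) end.
  2:{ rewrite ss_zero in H0; [exact H0|]. intros; ring. }
  apply cv0_ss. intros j Hj.
  apply cv0_mult; [|apply lemmaA; auto; unfold N in Hj; lia].
  set (Cst := 2 ^ j * B * INR (S N) ^ S N).
  apply (cv0_squeeze _ (fun z => Cst * z ^ (S N - j))).
  - rewrite <- (Rmult_0_r Cst). apply cv0_scal.
    replace 0 with (0 ^ (S N - j)) by (replace (S N - j)%nat with (S (N - j)) by lia; simpl; ring).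
    apply cv0_pow, cv0_id.
  - exists (y0 / INR (S N)). split.
    { apply Rdiv_lt_0_compat; auto. apply lt_0_INR; lia. }
    intros z [Hz1 Hz2].
    assert (HSN : 0 < INR (S N)) by (apply lt_0_INR; lia).
    assert (Hzy : z * INR (S N) < y0).
    { apply (Rmult_lt_compat_r (INR (S N))) in Hz2; auto. unfold Rdiv in Hz2.
      rewrite Rmult_assoc, Rinv_l, Rmult_1_r in Hz2; lra. }
    assert (Hzj : 0 < z ^ j) by (apply pow_lt; lra).
    unfold Rdiv. rewrite Rabs_mult, Rabs_inv, (Rabs_right (z ^ j)) by lra.
    assert (HD : Rabs (DI j (fun x => Rm (z * (x + 1))) 0) <= 2 ^ j * (B * (z * INR (S N)) ^ S N)).
    { apply DI_bound. intros l Hl. rewrite Rplus_0_l.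
      assert (Hl' : INR l + 1 <= INR (S N)) by (rewrite <- S_INR; apply le_INR; unfold N in *; lia).
      assert (Hlp : 0 < INR l + 1) by (pose proof (pos_INR l); lra).
      eapply Rle_trans; [apply HB|].
      - split; [apply Rmult_lt_0_compat; lra|]. assert (z * (INR l + 1) <= z * INR (S N)) by (apply Rmult_le_compat_l; lra). lra.
      - apply Rmult_le_compat_l; auto. apply pow_incr. split; [apply Rmult_le_pos; lra|].
        apply Rmult_le_compat_l; lra. }
    replace (Cst * z ^ (S N - j)) with (2 ^ j * (B * (z * INR (S N)) ^ S N) * / z ^ j).
    + apply Rmult_le_compat_r; [left; apply Rinv_0_lt_compat; auto|]. exact HD.
    + unfold Cst. replace (S N) with (j + (S N - j))%nat at 2 by lia. rewrite Rpow_mult_distr, pow_add.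
      replace (INR (S N) ^ (j + (S N - j))) with (INR (S N) ^ S N) by (f_equal; lia).
      field. apply pow_nonzero; lra.
Qed.

Lemma sum_f_stable (f : nat -> R) N : (forall k, (N < k)%nat -> f k = 0) ->
  forall n, (N <= n)%nat -> sum_f_R0 f n = sum_f_R0 f N.
Proof.
  intros H n Hn. induction n.
  - assert (N = 0%nat) by lia. subst. reflexivity.
  - destruct (Nat.eq_dec N (S n)) as [->|Hne]; [reflexivity|].
    simpl. rewrite IHn by lia. rewrite H by lia. ring.
Qed.

Theorem mainTheorem11
  (* the generic model: f, its asymptotics, its Mellin transform F *)
  (f : R -> R) (c0 eps : R)
  (Hf_cont : forall x, 0 <= x -> limit1_in f (fun y => 0 <= y) (f x) x)
  (Heps : 0 < eps)
  (Hf_asym : exists K M, 0 < M /\ forall x, M <= x ->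
       Rabs (f x - c0 / x) <= K * Rpower x (- 1 - eps))
  (F : R -> R)
  (HMellin : forall z, 0 < z < 1 ->
       improper_int_0_inf (fun x => f x * Rpower x (- z)) (F z))
  (* Laurent expansion F(z) = sum_{n>=-1} c_n z^n near 0; here c n = c_{n-1} *)
  (c : nat -> R) (r : R) (Hr : 0 < r)
  (HLaurent : forall z, 0 < z < r -> Pser c z (z * F z))
  (* renormalization point mu and the convolution inverse of phi_mu *)
  (mu : R) (Hmu : 0 < mu)
  (phi_mu_inv : R -> forest -> R)
  (Hinv : forall z w, conv (phi_mu_inv z) (phi F mu z) w = counit w)
  (* P(w) : lim_{z -> 0} phi_{R,s}(w) = P(w)(ln (s/mu)) *)
  (P : forest -> list R)
  (HP : forall (w : forest) (s : R), 0 < s ->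
       limit1_in (fun z => conv (phi_mu_inv z) (phi F s z) w) (fun z => 0 < z)
                 (peval (P w) (ln (s / mu))) 0) :
  let sigma := fun w => - partial0 (P w) in
  (forall (n : nat) (w : forest), (fsize w < n)%nat -> conv_pow sigma n w = 0) /\
  (forall w : forest,
     infinite_sum (fun n => c n * conv_pow sigma n w) (sigma [Bplus w])).
Proof.
  intros sigma.
  assert (HPt : HPtype F mu phi_mu_inv P) by exact HP.
  assert (Hnil : sigma [] = 0).
  { assert (E : forall b, peval (P []) b = peval [1] b).
    { intros b. apply (cv0_unique (fun z => conv (phi_mu_inv z) (phi F (mu * exp b) z) [])).
      - apply HP'; auto.
      - apply (cv0_ext_all (fun _ => 1)); [|simpl; replace (1 + b * 0) with 1 by ring; apply cv0_const].
        intros z _. specialize (Hinv z []). unfold conv in *. simpl in *.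
        unfold phi in *. unfold fsize in *. simpl in *. rewrite Rmult_0_r, Ropp_0 in *.
        unfold Rpower in *. rewrite Rmult_0_l, exp_0 in *. lra. }
    unfold sigma, partial0. rewrite (coef_eq _ _ E 1). simpl. ring. }
  assert (Hvan : forall (n : nat) (w : forest), (fsize w < n)%nat -> conv_pow sigma n w = 0).
  { induction n; intros w Hw; [lia|].
    simpl conv_pow. rewrite conv_sumL. apply sumL_zero. intros p Hp.
    pose proof (size_cop w p Hp) as Hs.
    destruct (fst p) as [|t l] eqn:E1.
    - rewrite Hnil. ring.
    - rewrite IHn; [ring|]. assert (1 <= fsize (t :: l))%nat by (apply fsize_nonnil; discriminate).
      lia. }
  split; [exact Hvan|].
  intros w. set (N := fsize w).
  assert (Hpik : forall k v, pik P k v = conv_pow sigma k v) by (intros; apply (pik_pow F mu phi_mu_inv P); auto).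
  assert (Hmain : sigma [Bplus w] = ss (S N) (fun k => c k * pik P k w)).
  { pose proof (lemmaA F mu phi_mu_inv P Hmu HPt [Node w] 1) as HA.
    rewrite fsize_single, fsize_Node in HA. specialize (HA ltac:(lia)).
    unfold sigma, partial0, Bplus. replace (- nth 1 (P [Node w]) 0) with ((-1) ^ 1 * nth 1 (P [Node w]) 0) by ring.
    apply (cv0_unique _ _ _ HA).
    apply (cv0_ext_all (fun z => Rpower mu (- z) *
        (aL F mu phi_mu_inv w (fun m => ss (S (fsize w)) (fun k => c k * (z * INR (S m)) ^ k)) z +
         aL F mu phi_mu_inv w (fun m => (z * INR (S m)) * F (z * INR (S m)) -
            ss (S (fsize w)) (fun k => c k * (z * INR (S m)) ^ k)) z))).
    { intros z Hz. rewrite bplus_step by auto. rewrite <- aL_plus. f_equal.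
      unfold aL. apply sumL_ext. intros; ring. }
    rewrite <- (Rmult_1_l (ss (S N) _)), <- (Rplus_0_r (ss (S N) _)).
    apply cv0_mult.
    - apply (cv0_ext_all (fun z => exp (z * (- ln mu)))); [intros; unfold Rpower; f_equal; ring|].
      apply cv0_exp_lin.
    - apply cv0_plus.
      + apply poly_part; auto.
      + apply (rem_part F mu phi_mu_inv P c r); auto. }
  intros e He. exists N. intros n Hn. unfold R_dist.
  rewrite (sum_f_stable _ N); [| intros k Hk; rewrite Hvan; [ring|unfold N in Hk; lia] | lia].
  rewrite sum_f_ss, Hmain.
  rewrite (ss_ext (S N) _ (fun k => c k * pik P k w)) by (intros; rewrite Hpik; reflexivity).
  rewrite Rminus_diag, Rabs_R0. auto.
Qed.
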